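(* The set $\{G\in\mathcal{C}(\mathbb{T}^{\mathbb{N}}): G \text{ is torsion-free}\}$ is a $G_\delta$ subset of $\mathcal{C}(\mathbb{T}^{\mathbb{N}})$.
   Context: Let $\mathbb{T}=\mathbb{R}/\mathbb{Z}$ with its usual metric $d_{\mathbb{T}}$ (diameter $1/2$), and $\mathbb{T}^{\mathbb{N}}$ with metric $d(x,y)=\sum_{n=0}^\infty 2^{-n}d_{\mathbb{T}}(x(n),y(n))$. $\mathcal{C}(\mathbb{T}^{\mathbb{N}})$ is the set of nonempty compact connected subgroups of $\mathbb{T}^{\mathbb{N}}$ with the Hausdorff metric induced by $d$. *)

(* Defs.v *)
From Stdlib Require Import Reals Lra List.
From Coquelicot Require Import Coquelicot.
Open Scope R_scope.

(* The circle T = R/Z, represented by the canonical representatives in [0,1). *)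
Definition torus := {r : R | 0 <= r < 1}.
Definition tval (a : torus) : R := proj1_sig a.

Lemma frac_part_range (r : R) : 0 <= frac_part r < 1.
Proof. destruct (base_fp r); lra. Qed.

Definition tproj (r : R) : torus := exist _ (frac_part r) (frac_part_range r).
Definition tadd (a b : torus) : torus := tproj (tval a + tval b).
Definition tneg (a : torus) : torus := tproj (- tval a).
Definition tzero : torus := tproj 0.

(* usual metric on T: distance from a-b to the nearest integer (diameter 1/2) *)
Definition dT (a b : torus) : R :=
  let f := frac_part (tval a - tval b) in Rmin f (1 - f).

Definition point := nat -> torus.
Definition padd (x y : point) : point := fun k => tadd (x k) (y k).
Definition pneg (x : point) : point := fun k => tneg (x k).
Definition pzero : point := fun _ => tzero.
Fixpoint pnmul (n : nat) (x : point) : point :=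
  match n with O => pzero | S m => padd x (pnmul m x) end.
Definition peq (x y : point) : Prop := forall k, tval (x k) = tval (y k).

Definition dist (x y : point) : R :=
  Series (fun n => (/ 2) ^ n * dT (x n) (y n)).

Definition pset := point -> Prop.

Definition is_open_set (U : pset) : Prop :=
  forall x, U x -> exists eps, 0 < eps /\ forall y, dist x y < eps -> U y.

Definition is_compact (K : pset) : Prop :=
  forall (I : Type) (U : I -> pset),
    (forall i, is_open_set (U i)) ->
    (forall x, K x -> exists i, U i x) ->
    exists l : list I, forall x, K x -> exists i, In i l /\ U i x.

Definition is_connected (K : pset) : Prop :=
  ~ (exists U V : pset, is_open_set U /\ is_open_set V /\
       (forall x, K x -> U x \/ V x) /\
       (exists x, K x /\ U x) /\ (exists x, K x /\ V x) /\
       (forall x, K x -> U x -> V x -> False)).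

Definition is_subgroup (G : pset) : Prop :=
  G pzero /\ forall x y, G x -> G y -> G (padd x (pneg y)).

Definition in_C (G : pset) : Prop :=
  (exists x, G x) /\ is_compact G /\ is_connected G /\ is_subgroup G.

Definition torsion_free (G : pset) : Prop :=
  forall x, G x -> forall n : nat, (0 < n)%nat -> peq (pnmul n x) pzero -> peq x pzero.

Definition inf_dist (x : point) (B : pset) : R :=
  real (Glb_Rbar (fun r => exists b, B b /\ r = dist x b)).
Definition hdist (A B : pset) : R :=
  Rmax (real (Lub_Rbar (fun r => exists a, A a /\ r = inf_dist a B)))
       (real (Lub_Rbar (fun r => exists b, B b /\ r = inf_dist b A))).

Definition C_open (U : pset -> Prop) : Prop :=
  forall G, in_C G -> U G ->
    exists eps, 0 < eps /\ forall H, in_C H -> hdist G H < eps -> U H.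

Definition Gdelta_in_C (P : pset -> Prop) : Prop :=
  exists U : nat -> (pset -> Prop),
    (forall n, C_open (U n)) /\
    (forall G, in_C G -> (P G <-> forall n, U n G)).

(* Main.v *)
From Pilot Require Import Defs.
From Stdlib Require Import Reals Lra Lia ZArith List Classical Cantor.
From Coquelicot Require Import Coquelicot.
Open Scope R_scope.
Notation pdist := Pilot.Defs.dist.

Definition nrm (t : R) := Rmin (frac_part t) (1 - frac_part t).

Lemma nrm_le_int t z : nrm t <= Rabs (t - IZR z).
Proof.
  pose proof (Rplus_Int_part_frac_part t) as Ht.
  pose proof (base_fp t) as [Hf1 Hf2].
  set (I := Int_part t) in *. set (f := frac_part t) in *.
  pose proof (Rle_abs (t - IZR z)) as A1.
  pose proof (Rle_abs (-(t - IZR z))) as A2. rewrite Rabs_Ropp in A2.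
  unfold nrm; fold f.
  destruct (Z_le_gt_dec z I) as [Hz|Hz].
  - apply IZR_le in Hz. pose proof (Rmin_l f (1-f)). lra.
  - assert (Hz' : (I + 1 <= z)%Z) by lia. apply IZR_le in Hz'. rewrite plus_IZR in Hz'.
    pose proof (Rmin_r f (1-f)). simpl in Hz'. lra.
Qed.

Lemma nrm_eq_int t : exists z, nrm t = Rabs (t - IZR z).
Proof.
  pose proof (Rplus_Int_part_frac_part t) as Ht.
  pose proof (base_fp t) as [Hf1 Hf2].
  set (I := Int_part t) in *. set (f := frac_part t) in *.
  unfold nrm; fold f. unfold Rmin. destruct (Rle_dec f (1 - f)).
  - exists I. rewrite Rabs_pos_eq; lra.
  - exists (I + 1)%Z. rewrite plus_IZR. simpl. rewrite Rabs_left1; lra.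
Qed.

Lemma nrm_nonneg t : 0 <= nrm t.
Proof. pose proof (base_fp t). unfold nrm, Rmin. destruct Rle_dec; lra. Qed.

Lemma nrm_le_half t : nrm t <= /2.
Proof. pose proof (base_fp t). unfold nrm, Rmin. destruct Rle_dec; lra. Qed.

Lemma nrm_opp t : nrm (- t) = nrm t.
Proof.
  apply Rle_antisym.
  - destruct (nrm_eq_int t) as [z Hz]. rewrite Hz.
    pose proof (nrm_le_int (-t) (- z)). rewrite opp_IZR in H.
    replace (- t - - IZR z) with (- (t - IZR z)) in H by ring. rewrite Rabs_Ropp in H. exact H.
  - destruct (nrm_eq_int (-t)) as [z Hz]. rewrite Hz.
    pose proof (nrm_le_int t (- z)). rewrite opp_IZR in H.
    replace (t - - IZR z) with (- (- t - IZR z)) in H by ring. rewrite Rabs_Ropp in H. exact H.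
Qed.

Lemma nrm_add_int t z : nrm (t + IZR z) = nrm t.
Proof.
  apply Rle_antisym.
  - destruct (nrm_eq_int t) as [w Hw]. rewrite Hw.
    pose proof (nrm_le_int (t + IZR z) (w + z)). rewrite plus_IZR in H.
    replace (t + IZR z - (IZR w + IZR z)) with (t - IZR w) in H by ring. exact H.
  - destruct (nrm_eq_int (t + IZR z)) as [w Hw]. rewrite Hw.
    pose proof (nrm_le_int t (w - z)). rewrite minus_IZR in H.
    replace (t - (IZR w - IZR z)) with (t + IZR z - IZR w) in H by ring. exact H.
Qed.

Lemma nrm_tri s t : nrm (s + t) <= nrm s + nrm t.
Proof.
  destruct (nrm_eq_int s) as [a Ha]. destruct (nrm_eq_int t) as [b Hb].
  rewrite Ha, Hb. pose proof (nrm_le_int (s + t) (a + b)). rewrite plus_IZR in H.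
  replace (s + t - (IZR a + IZR b)) with ((s - IZR a) + (t - IZR b)) in H by ring.
  pose proof (Rabs_triang (s - IZR a) (t - IZR b)). lra.
Qed.

Lemma nrm_zero_int t : nrm t = 0 -> exists z, t = IZR z.
Proof.
  intros H. destruct (nrm_eq_int t) as [z Hz]. exists z.
  rewrite H in Hz. symmetry in Hz. apply Rabs_eq_0 in Hz. lra.
Qed.

Lemma nrm_0 : nrm 0 = 0.
Proof. pose proof (nrm_le_int 0 0). pose proof (nrm_nonneg 0).
  replace (0 - IZR 0) with 0 in H by (simpl; ring). rewrite Rabs_R0 in H. lra. Qed.

Lemma dT_nrm a b : dT a b = nrm (tval a - tval b).
Proof. reflexivity. Qed.

Lemma tval_range a : 0 <= tval a < 1.
Proof. destruct a; simpl; auto. Qed.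

Lemma tval_tadd a b : exists z, tval (tadd a b) = tval a + tval b + IZR z.
Proof. exists (- Int_part (tval a + tval b))%Z. unfold tadd, tproj, tval at 1; simpl.
  unfold frac_part. rewrite opp_IZR. ring. Qed.

Lemma tval_tzero : tval tzero = 0.
Proof. unfold tzero, tproj, tval; simpl. unfold frac_part.
  assert (H : (0 = Int_part 0)%Z) by (apply Int_part_spec; simpl; lra).
  rewrite <- H. simpl. ring. Qed.

Lemma dT_nonneg a b : 0 <= dT a b.
Proof. apply nrm_nonneg. Qed.
Lemma dT_le a b : dT a b <= /2.
Proof. apply nrm_le_half. Qed.
Lemma dT_sym a b : dT a b = dT b a.
Proof. rewrite !dT_nrm. rewrite <- nrm_opp. f_equal; ring. Qed.
Lemma dT_tri a b c : dT a c <= dT a b + dT b c.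
Proof. rewrite !dT_nrm. replace (tval a - tval c) with ((tval a - tval b) + (tval b - tval c)) by ring.
  apply nrm_tri. Qed.
Lemma dT_eq a b : tval a = tval b -> dT a b = 0.
Proof. intros H. rewrite dT_nrm, H. replace (tval b - tval b) with 0 by ring. apply nrm_0. Qed.
Lemma dT_zero a b : dT a b = 0 -> tval a = tval b.
Proof. rewrite dT_nrm. intros H. apply nrm_zero_int in H as [z Hz].
  pose proof (tval_range a). pose proof (tval_range b).
  assert (z = 0%Z) by (apply one_IZR_lt1; lra). subst z. simpl in Hz. lra. Qed.
Lemma dT_tadd a b c d : dT (tadd a b) (tadd c d) <= dT a c + dT b d.
Proof.
  destruct (tval_tadd a b) as [z1 H1]. destruct (tval_tadd c d) as [z2 H2].
  rewrite !dT_nrm, H1, H2.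
  replace (tval a + tval b + IZR z1 - (tval c + tval d + IZR z2)) with
    ((tval a - tval c) + (tval b - tval d) + IZR (z1 - z2)) by (rewrite minus_IZR; ring).
  rewrite nrm_add_int. apply nrm_tri. Qed.

Lemma dT_pnmul n x y k : dT (pnmul n x k) (pnmul n y k) <= INR n * dT (x k) (y k).
Proof.
  induction n as [|n IH]; simpl pnmul.
  - rewrite dT_eq by reflexivity. simpl; lra.
  - unfold padd. eapply Rle_trans. apply dT_tadd. rewrite S_INR. lra.
Qed.


Lemma geom_ex : ex_series (fun n => (/2)^n).
Proof. apply ex_series_geom. rewrite Rabs_pos_eq; lra. Qed.

Lemma term_bounds (x y : point) n : 0 <= (/2)^n * dT (x n) (y n) <= (/2)^n.
Proof. pose proof (dT_nonneg (x n) (y n)). pose proof (dT_le (x n) (y n)).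
  assert (0 < (/2)^n) by (apply pow_lt; lra). split; nra. Qed.

Lemma ex_dist x y : ex_series (fun n => (/2)^n * dT (x n) (y n)).
Proof. apply (@ex_series_le R_AbsRing R_CompleteNormedModule) with (fun n => (/2)^n); [|apply geom_ex].
  intros n. change (norm ((/2)^n * dT (x n) (y n))) with (Rabs ((/2)^n * dT (x n) (y n))).
  pose proof (term_bounds x y n). rewrite Rabs_pos_eq; lra. Qed.

Lemma Series_nonneg a : (forall n, 0 <= a n) -> ex_series a -> 0 <= Series a.
Proof. intros H He. replace 0 with (Series (fun n => 0 * a n)).
  apply Series_le; [intros n; specialize (H n); lra | exact He].
  rewrite Series_scal_l. ring. Qed.

Lemma Series_ge_term a j : (forall n, 0 <= a n) -> ex_series a -> a j <= Series a.
Proof. intros H He. rewrite (Series_incr_n a (S j)); [| apply Nat.lt_0_succ | exact He]. simpl pred.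
  assert (0 <= Series (fun k => a (S j + k)%nat)).
  { apply Series_nonneg; [intros; apply H| apply (ex_series_incr_n a (S j)); exact He]. }
  destruct j. { change (sum_f_R0 a 0) with (a 0%nat). lra. }
  change (sum_f_R0 a (S j)) with (sum_f_R0 a j + a (S j)). pose proof (cond_pos_sum a j H). lra. Qed.

Lemma pd_nonneg x y : 0 <= pdist x y.
Proof. apply Series_nonneg; [intros; apply term_bounds | apply ex_dist]. Qed.

Lemma pd_le2 x y : pdist x y <= 2.
Proof. unfold Pilot.Defs.dist. apply Rle_trans with (Series (fun n => (/2)^n)).
  apply Series_le; [intros; apply term_bounds| apply geom_ex].
  right. apply is_series_unique. assert (Hq : Rabs (/2) < 1) by (rewrite Rabs_pos_eq; lra).
  pose proof (is_series_geom (/2) Hq) as Hg. replace (/(1 - /2)) with 2 in Hg by field. exact Hg. Qed.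

Lemma pd_sym x y : pdist x y = pdist y x.
Proof. unfold Pilot.Defs.dist; apply Series_ext; intros; rewrite dT_sym; reflexivity. Qed.

Lemma pd_tri x y z : pdist x z <= pdist x y + pdist y z.
Proof. unfold Pilot.Defs.dist. rewrite <- Series_plus by apply ex_dist.
  apply Series_le.
  - intros n. pose proof (term_bounds x z n). pose proof (dT_tri (x n) (y n) (z n)).
    assert (0 < (/2)^n) by (apply pow_lt; lra). split; [lra|nra].
  - exact (@ex_series_plus R_AbsRing R_NormedModule _ _ (ex_dist x y) (ex_dist y z)). Qed.

Lemma pd_peq x y : peq x y -> pdist x y = 0.
Proof. intros H. unfold Pilot.Defs.dist. rewrite (Series_ext _ (fun n => 0 * (/2)^n)).
  rewrite Series_scal_l; ring. intros n. rewrite dT_eq by apply H. ring. Qed.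

Lemma pd_zero x y : pdist x y = 0 -> peq x y.
Proof. intros H k. apply dT_zero.
  pose proof (Series_ge_term _ k (fun n => proj1 (term_bounds x y n)) (ex_dist x y)).
  fold (pdist x y) in H0. rewrite H in H0. pose proof (term_bounds x y k).
  assert (0 < (/2)^k) by (apply pow_lt; lra). pose proof (dT_nonneg (x k) (y k)). nra. Qed.

Lemma pd_pnmul n x y : pdist (pnmul n x) (pnmul n y) <= INR n * pdist x y.
Proof. unfold Pilot.Defs.dist. rewrite <- Series_scal_l. apply Series_le.
  - intros k. pose proof (term_bounds (pnmul n x) (pnmul n y) k). pose proof (dT_pnmul n x y k).
    assert (0 < (/2)^k) by (apply pow_lt; lra). split; [lra|nra].
  - apply (@ex_series_ext R_AbsRing R_NormedModule (fun k => ((/2)^k * dT (x k) (y k)) * INR n)).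
    intros; simpl; ring. apply ex_series_scal_r, ex_dist. Qed.


Lemma glb_facts (b : point) (G : pset) : (exists g, G g) ->
  0 <= inf_dist b G /\ inf_dist b G <= 2 /\
  forall eps, inf_dist b G < eps -> exists g, G g /\ pdist b g < eps.
Proof.
  intros [g0 Hg0]. unfold inf_dist.
  destruct (Glb_Rbar_correct (fun r => exists b0, G b0 /\ r = pdist b b0)) as [Hlb Hglb].
  destruct (Glb_Rbar (fun r => exists b0, G b0 /\ r = pdist b b0)) as [m| |] eqn:E.
  - assert (H0 : Rbar_le 0 m).
    { apply Hglb. intros x [b0 [_ ->]]. simpl. apply pd_nonneg. }
    assert (H1 : Rbar_le m (pdist b g0)) by (apply Hlb; eauto).
    simpl in H0, H1 |- *. pose proof (pd_le2 b g0). split; [lra|split;[lra|]].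
    intros eps Heps. apply NNPP. intros Hno.
    assert (H2 : Rbar_le eps m).
    { apply Hglb. intros x [b0 [Hb0 ->]]. simpl. apply Rnot_lt_le. intros Hlt. apply Hno; eauto. }
    simpl in H2. lra.
  - exfalso. assert (H1 : Rbar_le p_infty (pdist b g0)) by (apply Hlb; eauto). simpl in H1. exact H1.
  - exfalso. assert (H0 : Rbar_le 0 m_infty).
    { apply Hglb. intros x [b0 [_ ->]]. simpl. apply pd_nonneg. }
    simpl in H0. exact H0.
Qed.

Lemma hdist_close G H eps : (exists g, G g) -> (exists h, H h) -> hdist G H < eps ->
  forall h, H h -> exists g, G g /\ pdist h g < eps.
Proof.
  intros HG [h0 Hh0] Hd h Hh. unfold hdist in Hd.
  pose proof (Rmax_r (real (Lub_Rbar (fun r => exists a, G a /\ r = inf_dist a H)))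
                     (real (Lub_Rbar (fun r => exists b, H b /\ r = inf_dist b G)))) as Hm.
  destruct (Lub_Rbar_correct (fun r => exists b, H b /\ r = inf_dist b G)) as [Hub Hlub].
  destruct (Lub_Rbar (fun r => exists b, H b /\ r = inf_dist b G)) as [l| |] eqn:E.
  - assert (H1 : Rbar_le (inf_dist h G) l) by (apply Hub; eauto). simpl in H1, Hm.
    destruct (glb_facts h G HG) as [_ [_ Happ]]. apply Happ. cbn [real] in Hd, Hm. lra.
  - exfalso. assert (H2 : Rbar_le p_infty 2).
    { apply Hlub. intros x [b [Hb ->]]. simpl. apply (glb_facts b G HG). }
    simpl in H2. exact H2.
  - exfalso. assert (H1 : Rbar_le (inf_dist h0 G) m_infty) by (apply Hub; eauto). simpl in H1. exact H1.
Qed.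

Definition Idx (F : pset) := {p : point * R | 0 < snd p /\ forall y, pdist (fst p) y < snd p -> ~ F y}.

Lemma list_min (F : pset) (l : list (Idx F)) :
  exists eps, 0 < eps /\ forall i, In i l -> eps <= snd (proj1_sig i) / 2.
Proof.
  induction l as [|i l [e [He Hl]]].
  - exists 1. split; [lra| intros i []].
  - destruct i as [[x r] [Hr Hf]] eqn:Ei. simpl in *.
    exists (Rmin e (r/2)). split. apply Rmin_pos; lra.
    intros j [<-|Hj]; simpl. apply Rmin_r. eapply Rle_trans; [apply Rmin_l| auto].
Qed.

Lemma compact_uniform (K F : pset) : is_compact K ->
  (forall x, K x -> exists e, 0 < e /\ forall y, pdist x y < e -> ~ F y) ->
  exists eps, 0 < eps /\ forall x y, K x -> pdist x y < eps -> ~ F y.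
Proof.
  intros Hc Hloc.
  destruct (Hc (Idx F) (fun i y => pdist (fst (proj1_sig i)) y < snd (proj1_sig i) / 2)) as [l Hl].
  - intros [[x r] [Hr Hf]] y Hy. simpl in *. exists (r/2 - pdist x y). split; [lra|].
    intros z Hz. pose proof (pd_tri x y z). lra.
  - intros x Hx. destruct (Hloc x Hx) as [e [He Hf]].
    exists (exist _ (x, e) (conj He Hf)). simpl. rewrite pd_peq by (intro; reflexivity). lra.
  - destruct (list_min F l) as [eps [Heps Hmin]]. exists eps. split; [exact Heps|].
    intros x y Hx Hxy. destruct (Hl x Hx) as [i [Hi Hu]]. specialize (Hmin i Hi).
    destruct i as [[z r] [Hr Hf]]. simpl in *. apply Hf.
    pose proof (pd_tri z x y). lra.
Qed.

Definition V (n k : nat) (G : pset) : Prop :=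
  forall x, G x -> (0 < n)%nat -> peq (pnmul n x) pzero -> pdist x pzero < / (INR k + 1).

Lemma V_open n k : C_open (V n k).
Proof.
  intros G HG HV.
  set (r := / (INR k + 1)).
  set (F := fun y => (0 < n)%nat /\ peq (pnmul n y) pzero /\ r <= pdist y pzero).
  assert (Hloc : forall x, G x -> exists e, 0 < e /\ forall y, pdist x y < e -> ~ F y).
  { intros x Hx. destruct (Nat.eq_dec n 0) as [->|Hn].
    - exists 1. split; [lra|]. intros y _ [Hc _]. lia.
    - assert (Hn' : (0 < n)%nat) by lia.
      destruct (classic (peq (pnmul n x) pzero)) as [Hp|Hp].
      + specialize (HV x Hx Hn' Hp). fold r in HV. exists (r - pdist x pzero). split; [lra|].
        intros y Hy [_ [_ Hr]]. pose proof (pd_tri y x pzero). rewrite (pd_sym y x) in H. lra.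
      + assert (Hd : 0 < pdist (pnmul n x) pzero).
        { pose proof (pd_nonneg (pnmul n x) pzero). destruct H as [H|H]; auto.
          exfalso. apply Hp, pd_zero. auto. }
        assert (HnR : 0 < INR n) by (apply lt_0_INR; lia).
        exists (pdist (pnmul n x) pzero / INR n). split. apply Rdiv_lt_0_compat; lra.
        intros y Hy [_ [Hpy _]].
        pose proof (pd_pnmul n x y).
        assert (INR n * pdist x y < pdist (pnmul n x) pzero).
        { apply (Rmult_lt_compat_l (INR n)) in Hy; auto. field_simplify in Hy; lra. }
        pose proof (pd_tri (pnmul n x) (pnmul n y) pzero).
        rewrite (pd_peq _ _ Hpy) in H1. lra. }
  destruct HG as [HGne [Hc _]].
  destruct (compact_uniform G F Hc Hloc) as [eps [Heps Hu]].
  exists eps. split; [exact Heps|]. intros H HH Hd x Hx Hn Hp.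
  destruct (hdist_close G H eps HGne (proj1 HH) Hd x Hx) as [g [Hg Hgx]].
  apply Rnot_le_lt. intros Hr. apply (Hu g x Hg). rewrite pd_sym; auto.
  unfold F. auto.
Qed.


Lemma small_inv d : 0 < d -> exists k : nat, / (INR k + 1) < d.
Proof.
  intros Hd. destruct (archimed (/ d)) as [H1 _].
  assert (Hpos : 0 < / d) by (apply Rinv_0_lt_compat; auto).
  exists (Z.to_nat (up (/ d))).
  rewrite INR_IZR_INZ, Z2Nat.id.
  2:{ apply le_IZR. lra. }
  set (X := IZR (up (/ d))) in *. rewrite <- (Rinv_inv d). apply Rinv_lt_contravar; [apply Rmult_lt_0_compat; lra | lra].
Qed.

Theorem mainTheorem6 : Gdelta_in_C torsion_free.
Proof.
  exists (fun m => V (fst (Cantor.of_nat m)) (snd (Cantor.of_nat m))). split.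
  - intros m. apply V_open.
  - intros G HG. split.
    + intros Ht m x Hx Hn Hp. rewrite (pd_peq x pzero (Ht x Hx _ Hn Hp)).
      apply Rinv_0_lt_compat. pose proof (pos_INR (snd (of_nat m))). lra.
    + intros HV x Hx n Hn Hp. apply pd_zero.
      pose proof (pd_nonneg x pzero) as [Hd|Hd]; [|auto].
      exfalso. destruct (small_inv _ Hd) as [k Hk].
      specialize (HV (Cantor.to_nat (n, k))). rewrite Cantor.cancel_of_to in HV. simpl in HV.
      specialize (HV x Hx Hn Hp). lra.
Qed.
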